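(* Let $\mathbf{A}$ be an $n\times n$ skew-symmetric matrix over a field $K$ and $\mathbf{v}\in K^n$. Then the set system $([n],\mathcal{B})$ with $\mathcal{B}=\{I\subseteq[n]:(\mathbf{A}+\mathbf{v}\mathbf{v}^T)[I]\text{ is nonsingular}\}$ is a strong $\Delta$-matroid.
   Context: A matrix is skew-symmetric if $\mathbf{A}_{ij}=-\mathbf{A}_{ji}$ and $\mathbf{A}_{ii}=0$. $\mathbf{M}[I]$ is the principal submatrix indexed by $I$; the empty matrix is nonsingular. A $\Delta$-matroid is a pair $(E,\mathcal{B})$ with $\mathcal{B}$ a nonempty family of subsets of the finite set $E$ such that for all $B,B'\in\mathcal{B}$ and $x\in B\triangle B'$ there is $y\in B\triangle B'$ with $B\triangle\{x,y\}\in\mathcal{B}$. It is strong if for all $B,B'\in\mathcal{B}$ and $x\in B\triangle B'$ there is $y\in B\triangle B'$ with both $B\triangle\{x,y\}\in\mathcal{B}$ and $B'\triangle\{x,y\}\in\mathcal{B}$. *)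

(* Defs.v *)
From mathcomp Require Import all_boot all_order all_algebra.
Set Implicit Arguments. Unset Strict Implicit. Unset Printing Implicit Defensive.
Import GRing.Theory.
Local Open Scope ring_scope.

Definition skew_symmetric (K : fieldType) (n : nat) (A : 'M[K]_n) : Prop :=
  (forall i j, A i j = - A j i) /\ (forall i, A i i = 0).

Definition principal_submx (K : fieldType) (n : nat) (M : 'M[K]_n)
  (I : {set 'I_n}) : 'M[K]_#|I| :=
  \matrix_(i < #|I|, j < #|I|) M (enum_val i) (enum_val j).

(* Nonsingular: nonzero determinant (the empty matrix has det 1). *)
Definition nonsingular (K : fieldType) (m : nat) (M : 'M[K]_m) : bool :=
  \det M != 0.

Definition symdiff (T : finType) (A B : {set T}) : {set T} := (A :\: B) :|: (B :\: A).
Notation "A :^: B" := (symdiff A B) (at level 52, left associativity) : set_scope.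

Definition delta_matroid (E : finType) (B : {set {set E}}) : Prop :=
  B != set0 /\
  forall B1 B2, B1 \in B -> B2 \in B -> forall x, x \in B1 :^: B2 ->
    exists2 y, y \in B1 :^: B2 & B1 :^: [set x; y] \in B.

Definition strong_delta_matroid (E : finType) (B : {set {set E}}) : Prop :=
  B != set0 /\
  forall B1 B2, B1 \in B -> B2 \in B -> forall x, x \in B1 :^: B2 ->
    exists2 y, y \in B1 :^: B2 &
      (B1 :^: [set x; y] \in B) /\ (B2 :^: [set x; y] \in B).

(* Main.v *)
Require Import Defs.
From mathcomp Require Import all_boot all_order all_algebra.
From mathcomp Require perm.
From mathcomp Require Import ring.
Import GRing.Theory.
Local Open Scope ring_scope.
Set Implicit Arguments. Unset Strict Implicit. Unset Printing Implicit Defensive.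

Section Aux.
Variable K : fieldType.

Definition Gm n (M : 'M[K]_n) (I : {set 'I_n}) : 'M[K]_n :=
  \matrix_(i, j) if j \in I then M i j else (i == j)%:R.

Lemma GmE n (M : 'M[K]_n) (I : {set 'I_n}) (i j : 'I_n) : Gm M I i j = if j \in I then M i j else (i == j)%:R.
Proof. by rewrite mxE. Qed.

Lemma detG_gen n (M : 'M[K]_n) m (f : 'I_m -> 'I_n) : injective f ->
  \det (\matrix_(a, b) M (f a) (f b)) = \det (Gm M [set f a | a : 'I_m]).
Proof.
elim: n M m f => [|n IH] M m f finj.
  case: m f finj => [|m] f finj; last by case: (f ord0).
  by rewrite !det_mx00.
case: (pickP (fun j => j \notin [set f a | a : 'I_m])) => [j /= jout | allin].
  have neq a : j != f a.
    apply/eqP => ja; move/negP: jout; apply; rewrite ja; apply/imsetP; by exists a.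
  pose f' a := s2val (unlift_some (neq a)).
  have ff' a : f a = lift j (f' a).
    by rewrite /f'; case: (unlift_some (neq a)).
  have f'inj : injective f'.
    by move=> a b e; apply: finj; rewrite !ff' e.
  have -> : \matrix_(a, b) M (f a) (f b) = \matrix_(a, b) (row' j (col' j M)) (f' a) (f' b).
    by apply/matrixP => a b; rewrite !mxE -!ff'.
  rewrite IH //.
  rewrite (expand_det_col _ j) (bigD1 j) //= big1 => [|i ij]; last first.
    by rewrite GmE (negPf jout) (negPf ij) mul0r.
  rewrite addr0 GmE (negPf jout) eqxx mul1r /cofactor -signr_odd addnn odd_double expr0 mul1r.
  congr (\det _); apply/matrixP => k l; rewrite !mxE (inj_eq lift_inj).
  have -> : (lift j l \in [set f a | a : 'I_m]) = (l \in [set f' a | a : 'I_m]).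
    apply/imsetP/imsetP => [[a _ e]|[a _ e]]; exists a => //.
      by apply: (@lift_inj _ j); rewrite -ff'.
    by rewrite ff' e.
  by [].
have IT : [set f a | a : 'I_m] = setT.
  by apply/setP => j; rewrite inE; have := allin j => /= /negbFE.
have e : m = n.+1.
  have : #|[set f a | a : 'I_m]| = m by rewrite card_imset // card_ord.
  by rewrite IT cardsT card_ord.
subst m.
pose s := perm.perm finj.
have -> : \matrix_(a, b) M (f a) (f b) = row_perm s (col_perm s M).
  by apply/matrixP => a b; rewrite !mxE !perm.permE.
rewrite IT row_permE col_permE !det_mulmx !det_perm perm.odd_permV mulrCA -expr2 sqrr_sign mulr1.
congr (\det _); apply/matrixP => i j; by rewrite GmE inE.
Qed.

Lemma det_principal n (M : 'M[K]_n) (I : {set 'I_n}) :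
  \det (principal_submx M I) = \det (Gm M I).
Proof.
rewrite /principal_submx detG_gen; last exact: enum_val_inj.
congr (\det (Gm M _)); apply/setP => x; apply/imsetP/idP => [[a _ ->]|xI].
  exact: enum_valP.
by exists (enum_rank_in xI x); rewrite // enum_rankK_in.
Qed.

Lemma det_G1 n (M : 'M[K]_n) x : \det (Gm M [set x]) = M x x.
Proof.
have -> : [set x] = [set (fun _ : 'I_1 => x) a | a : 'I_1].
  apply/setP => y; rewrite inE; apply/eqP/imsetP => [->|[a _ ->]] //; by exists ord0.
rewrite -detG_gen ?det_mx11 ?mxE //.
by move=> a b _; rewrite (ord1 a) (ord1 b).
Qed.

Lemma det_G2 n (M : 'M[K]_n) x y : x != y ->
  \det (Gm M [set x; y]) = M x x * M y y - M x y * M y x.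
Proof.
move=> xy.
pose f (a : 'I_2) := if a == ord0 then x else y.
have two (c : 'I_2) : c != ord0 -> c = lift ord0 ord0.
  by case: c => [[|[|c]] ?] //= _; apply: val_inj.
have finj : injective f.
  move=> a b; rewrite /f.
  case: (eqVneq a ord0) => [->|na]; case: (eqVneq b ord0) => [->|nb] //.
  - by move=> e; rewrite e eqxx in xy.
  - by move=> e; rewrite e eqxx in xy.
  - by rewrite (two _ na) (two _ nb).
have := detG_gen M finj.
have -> : [set f a | a : 'I_2] = [set x; y].
  apply/setP => z; rewrite !inE; apply/imsetP/orP => [[a _ ->]|[/eqP->|/eqP->]].
  - by rewrite /f; case: (a == ord0); [left|right].
  - by exists ord0.
  - by exists (lift ord0 ord0).
move=> e; rewrite -e.
rewrite (expand_det_row _ ord0) !big_ord_recl big_ord0 /cofactor !det_mx11 !mxE /=.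
by rewrite /bump /= expr0 expr1 addr0 !mul1r mulN1r mulrN.
Qed.


Definition dm n (I : {set 'I_n}) : 'M[K]_n := diag_mx (\row_i (i \in I)%:R).

Lemma dmE n (I : {set 'I_n}) i j : dm I i j = ((i \in I) && (i == j))%:R.
Proof. by rewrite /dm !mxE; case: (i \in I); case: (i == j). Qed.

Lemma dmT n (I : {set 'I_n}) : (dm I)^T = dm I.
Proof. exact: tr_diag_mx. Qed.

Lemma dmCT n (I : {set 'I_n}) : (1%:M - dm I)^T = 1%:M - dm I.
Proof. by rewrite linearB /= trmx1 dmT. Qed.

Lemma dmC n (I : {set 'I_n}) : dm (~: I) = 1%:M - dm I.
Proof.
apply/matrixP => i j; rewrite !mxE inE; case: (i \in I); case: (i == j) => /=;
  by rewrite ?subrr ?subr0.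
Qed.

Lemma dmDD n (I : {set 'I_n}) : dm I *m dm I = dm I.
Proof.
apply/matrixP => i j; rewrite /dm mul_diag_mx !mxE.
by case: (i \in I); rewrite ?mul1r ?mul0r ?mul0rn.
Qed.

Lemma dmD1D n (I : {set 'I_n}) : dm I *m (1%:M - dm I) = 0.
Proof. by rewrite mulmxBr mulmx1 dmDD subrr. Qed.

Lemma dm1DD n (I : {set 'I_n}) : (1%:M - dm I) *m dm I = 0.
Proof. by rewrite mulmxBl mul1mx dmDD subrr. Qed.

Lemma dm1D1D n (I : {set 'I_n}) : (1%:M - dm I) *m (1%:M - dm I) = 1%:M - dm I.
Proof. by rewrite mulmxBl mul1mx dmD1D subr0. Qed.

Lemma Gm_dm n (M : 'M[K]_n) I : Gm M I = M *m dm I + (1%:M - dm I).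
Proof.
apply/matrixP => i j; rewrite GmE mul_mx_diag !mxE.
case: (i =P j) => [->|ij] /=; case: (j \in I) => /=;
  by rewrite ?mulr1 ?mulr0 ?mulr1n ?mulr0n ?subrr ?subr0 ?add0r ?addr0.
Qed.

Lemma mulGm n (B N : 'M[K]_n) Z i j :
  (B *m Gm N Z) i j = if j \in Z then (B *m N) i j else B i j.
Proof.
rewrite !mxE; case: ifP => jZ.
  by apply: eq_bigr => k _; rewrite GmE jZ.
rewrite (bigD1 j) //= big1 => [|k kj]; first by rewrite GmE jZ eqxx mulr1 addr0.
by rewrite GmE jZ (negPf kj) mulr0.
Qed.

Definition pivot n (M : 'M[K]_n) X := invmx (Gm M X) *m Gm M (~: X).

Lemma in_symdiff (T : finType) (A B : {set T}) i :
  (i \in symdiff A B) = (i \in A) (+) (i \in B).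
Proof. by rewrite !inE; case: (i \in A); case: (i \in B). Qed.

Lemma pivotK n (M : 'M[K]_n) X Z : Gm M X \in unitmx ->
  Gm M X *m Gm (pivot M X) Z = Gm M (symdiff X Z).
Proof.
move=> U; apply/matrixP => i j; rewrite mulGm /pivot mulmxA mulmxV // mul1mx.
rewrite !GmE in_symdiff inE; by case: (j \in X); case: (j \in Z).
Qed.

Definition isS n (M : 'M[K]_n) (w : 'cV[K]_n) :=
  forall c : 'cV_n, c^T *m M *m c = (w^T *m c) *m (w^T *m c).

Lemma tr11 (A : 'M[K]_1) : A^T = A.
Proof. by apply/matrixP => i j; rewrite !ord1 mxE. Qed.

Lemma edelta n (M : 'M[K]_n) i j :
  delta_mx 0 i *m M *m (delta_mx j 0 : 'cV_n) = (M i j)%:M.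
Proof.
rewrite -rowE -colE; apply/matrixP => a b; by rewrite !ord1 !mxE eqxx.
Qed.

Lemma wdelta n (w : 'cV[K]_n) i : w^T *m delta_mx i 0 = (w i 0)%:M.
Proof. rewrite -colE; apply/matrixP => a b; by rewrite !ord1 !mxE eqxx. Qed.

Lemma S_diag n (M : 'M[K]_n) w : isS M w -> forall i, M i i = w i 0 ^+ 2.
Proof.
move=> S i; have := S (delta_mx i 0); rewrite trmx_delta edelta wdelta -scalar_mxM.
by move/matrixP/(_ 0 0); rewrite !mxE eqxx !mulr1n.
Qed.

Lemma S_off n (M : 'M[K]_n) w : isS M w -> forall i j,
  M j i = 2%:R * w i 0 * w j 0 - M i j.
Proof.
move=> S i j; have := S (delta_mx i 0 + delta_mx j 0).
have tD : (delta_mx i 0 + delta_mx j 0 : 'cV[K]_n)^T = delta_mx 0 i + delta_mx 0 j.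
  by apply/matrixP => a b; rewrite (ord1 a) !mxE !eqxx /= ?andbT.
rewrite tD !mulmxDl !mulmxDr !edelta !wdelta.
move/matrixP/(_ 0 0); rewrite !mxE !big_ord1 !mxE eqxx !mulr1n => E.
have Ei := S_diag S i; have Ej := S_diag S j.
move: E; rewrite Ei Ej => E.
have -> : M j i = (w i 0 ^+ 2 + M i j + (M j i + w j 0 ^+ 2)) - w i 0 ^+ 2 - M i j - w j 0 ^+ 2.
  by ring.
by rewrite E; ring.
Qed.


Lemma sum_skew n (g : 'I_n -> 'I_n -> K) :
  (forall k l, g l k = - g k l) -> (forall k, g k k = 0) ->
  \sum_k \sum_l g k l = 0.
Proof.
move=> gs g0.
have sp k l : g k l = (if (k < l)%N then g k l else 0) + (if (l < k)%N then g k l else 0).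
  case: (ltngtP k l) => [kl|lk|kl]; rewrite ?addr0 ?add0r //.
  by move/val_inj: kl => ->; rewrite g0.
rewrite (eq_bigr (fun k : 'I_n => \sum_(l : 'I_n) ((if (k < l)%N then g k l else 0) +
    (if (l < k)%N then g k l else 0)))); last by move=> k _; apply: eq_bigr => l _; exact: sp.
under eq_bigr do rewrite big_split /=.
rewrite big_split /= [X in _ + X]exchange_big /=.
rewrite [X in _ + X](_ : _ = - \sum_(k : 'I_n) \sum_(l : 'I_n) (if (k < l)%N then g k l else 0)) ?subrr //.
rewrite -sumrN; apply: eq_bigr => a _; rewrite -sumrN; apply: eq_bigr => b _.
by case: ifP => _; rewrite ?oppr0 // gs.
Qed.

Lemma qf_skew n (A : 'M[K]_n) (c : 'cV_n) : skew_symmetric A -> c^T *m A *m c = 0.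
Proof.
move=> [As A0]; apply/matrixP => a b; rewrite (ord1 a) (ord1 b) !mxE.
rewrite (eq_bigr (fun j : 'I_n => \sum_(k : 'I_n) c k 0 * A k j * c j 0)); last first.
  by move=> j _; rewrite !mxE big_distrl; apply: eq_bigr => k _; rewrite !mxE.
rewrite exchange_big /=; apply: sum_skew => [k l|k].
  by rewrite As; ring.
by rewrite A0 mulr0 mul0r.
Qed.

Lemma isS_base n (A : 'M[K]_n) (v : 'cV_n) : skew_symmetric A -> isS (A + v *m v^T) v.
Proof.
move=> sk c; rewrite mulmxDr mulmxDl qf_skew // add0r !mulmxA -mulmxA.
by rewrite -[c^T *m v]tr11 trmx_mul trmxK mulmxA.
Qed.


Lemma Dlem n (I : {set 'I_n}) m (B : 'M[K]_(m, n)) :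
  [/\ B *m dm I *m dm I = B *m dm I, B *m dm I *m (1%:M - dm I) = 0,
      B *m (1%:M - dm I) *m dm I = 0 &
      B *m (1%:M - dm I) *m (1%:M - dm I) = B *m (1%:M - dm I)].
Proof.
by split; rewrite -mulmxA ?dmDD ?dmD1D ?dm1DD ?dm1D1D ?mulmx0.
Qed.

Lemma trB m p (A B : 'M[K]_(m, p)) : (A - B)^T = A^T - B^T.
Proof. by apply/matrixP => i j; rewrite !mxE. Qed.

Lemma pivot_S n (M : 'M[K]_n) w X : isS M w -> Gm M X \in unitmx ->
  isS (pivot M X) ((dm X *m pivot M X - (1%:M - dm X))^T *m w).
Proof.
move=> SM U c.
have GN : (M *m dm X + (1%:M - dm X)) *m pivot M X = M *m (1%:M - dm X) + dm X.
  rewrite -Gm_dm /pivot mulmxA mulmxV // mul1mx Gm_dm dmC.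
  have e : 1%:M - (1%:M - dm X) = dm X :> 'M[K]_n by rewrite opprB addrC subrK.
  by rewrite e.
move: GN; generalize (pivot M X) => N; set D := dm X => GN.
pose s := N *m c.
pose t := D *m s - (1%:M - D) *m c.
have E : M *m (D *m s) + (1%:M - D) *m s = M *m ((1%:M - D) *m c) + D *m c.
  by rewrite /s !mulmxA -!mulmxDl GN.
have Mt : M *m t = D *m c - (1%:M - D) *m s.
  rewrite /t mulmxBr; move/(canRL (addrK _)): E => ->.
  by rewrite addrAC [M *m _ + D *m c]addrC addrK.
have tt : t^T = s^T *m D - c^T *m (1%:M - D).
  by rewrite /t trB !trmx_mul /D dmT dmCT.
have ut : ((D *m N - (1%:M - D))^T *m w)^T *m c = w^T *m t.
  by rewrite trmx_mul trmxK -mulmxA mulmxBl -mulmxA.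
rewrite ut -SM -[t^T *m M *m t]mulmxA Mt tt -[c^T *m N *m c]mulmxA -/s.
clearbody s t.
have [L1 L2 L3 L4] := Dlem X s^T.
have [L1' L2' L3' L4'] := Dlem X c^T.
move: L1 L2 L3 L4 L1' L2' L3' L4'; rewrite -/D; set E1 := 1%:M - D.
move=> L1 L2 L3 L4 L1' L2' L3' L4'.
rewrite mulmxBl [s^T *m D *m _]mulmxBr [c^T *m _ *m _]mulmxBr !mulmxA.
rewrite L1 L2 L3' L4' !mul0mx subr0 sub0r opprK.
rewrite -[s^T *m D *m c]tr11 !trmx_mul trmxK /D dmT mulmxA -mulmxDl -mulmxDr.
by rewrite /E1 addrC subrK mulmx1.
Qed.



Lemma DAD n (I : {set 'I_n}) (A : 'M[K]_n) i j :
  (dm I *m A *m dm I) i j = (i \in I)%:R * A i j * (j \in I)%:R.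
Proof. by rewrite /dm mul_mx_diag mxE mul_diag_mx !mxE. Qed.

Lemma Dv n (I : {set 'I_n}) (v : 'cV[K]_n) i : (dm I *m v) i 0 = (i \in I)%:R * v i 0.
Proof. by rewrite /dm mul_diag_mx !mxE. Qed.

Lemma outerE n (a b : 'cV[K]_n) i j : (a *m b^T) i j = a i 0 * b j 0.
Proof. by rewrite mxE big_ord1 !mxE. Qed.

Lemma mxDE m p (A B : 'M[K]_(m, p)) i j : (A + B) i j = A i j + B i j.
Proof. by rewrite !mxE. Qed.

Lemma mxBE m p (A B : 'M[K]_(m, p)) i j : (A - B) i j = A i j - B i j.
Proof. by rewrite !mxE. Qed.

Lemma mxZE m p a (A : 'M[K]_(m, p)) i j : (a *: A) i j = a * A i j.
Proof. by rewrite !mxE. Qed.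

Lemma subKmx n (D : 'M[K]_n) : 1%:M - (1%:M - D) = D.
Proof. by rewrite opprB addrC subrK. Qed.

Lemma inner n (N : 'M[K]_n) w Z x : isS N w -> Gm N Z \in unitmx -> x \in Z ->
  exists2 y, y \in Z &
    (\det (Gm N [set x; y]) != 0) /\ (\det (Gm (pivot N Z) [set x; y]) != 0).
Proof.
move=> SN U xZ.
have SP := pivot_S SN U.
have GN : Gm N Z *m pivot N Z = Gm N (~: Z) by rewrite /pivot mulmxA mulmxV // mul1mx.
move: SP; set u := (_ *m w) => SP.
have uD : dm Z *m u = dm Z *m (pivot N Z)^T *m dm Z *m w.
  rewrite /u trB trmx_mul dmT dmCT !mulmxA mulmxBr mulmxBl dmD1D mul0mx subr0.
  by rewrite !mulmxA.
move: GN SP uD; generalize (pivot N Z) => P GN SP uD.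
rewrite !Gm_dm dmC subKmx in GN.
set D := dm Z in GN uD *.
have DNDPD : D *m N *m D *m P *m D = D.
  transitivity (D *m ((N *m D + (1%:M - D)) *m P) *m D).
    rewrite mulmxDl mulmxDr mulmxDl !mulmxA.
    have [L1 L2 L3 L4] := Dlem Z 1%:M; rewrite !mul1mx in L1 L2 L3 L4.
    by rewrite L2 !mul0mx addr0.
  rewrite GN mulmxDr mulmxDl !mulmxA.
  have [L1 L2 L3 L4] := Dlem Z 1%:M; rewrite !mul1mx in L1 L2 L3 L4.
  have [M1 M2 M3 M4] := Dlem Z (dm Z *m N).
  by rewrite M3 add0r L1 L1.
pose w' := D *m w; pose u' := D *m u; pose k := (u'^T *m w) 0 0.
have u'T : u'^T = u^T *m D by rewrite trmx_mul /D dmT.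
have w'T : w'^T = w^T *m D by rewrite trmx_mul /D dmT.
have uw : u'^T *m w = k%:M by exact: mx11_scalar.
have uw' : u'^T *m w' = k%:M.
  have [L1 _ _ _] := Dlem Z u^T.
  by rewrite u'T /w' mulmxA /D L1 -/D -u'T.
have u'E : u'^T = w^T *m D *m P *m D.
  by rewrite /u' uD !trmx_mul trmxK /D dmT !mulmxA.
have kk : k * k = k.
  have e1 : w'^T *m P *m w' = u'^T *m w by rewrite u'E w'T /w' !mulmxA.
  have e2 : u^T *m w' = u'^T *m w by rewrite u'T /w' mulmxA.
  have := SP w'; rewrite e1 e2 uw -scalar_mxM => /matrixP/(_ 0 0).
  by rewrite !mxE eqxx !mulr1n => h; rewrite -h.
have PT : D *m P^T *m D = (u' *m u'^T) + (u' *m u'^T) - D *m P *m D.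
  apply/matrixP => i j; rewrite DAD mxE mxBE mxDE !outerE !Dv DAD (S_off SP i j); ring.
have nuE : D *m N *m D *m u' = (2%:R * k - 1) *: w'.
  have t1 : D *m N *m D *m (u' *m u'^T) *m w = k *: (D *m N *m D *m u').
    by rewrite -mulmxA -[u' *m u'^T *m w]mulmxA uw mul_mx_scalar -scalemxAr.
  have t2 : D *m N *m D *m (D *m P *m D) *m w = w'.
    have [L1 _ _ _] := Dlem Z (dm Z *m N).
    by rewrite !mulmxA /D L1 -/D DNDPD.
  have e : D *m N *m D *m u' = k *: (D *m N *m D *m u') + k *: (D *m N *m D *m u') - w'.
    rewrite {1}/u' uD.
    rewrite (_ : D *m N *m D *m (D *m P^T *m D *m w) = D *m N *m D *m (D *m P^T *m D) *m w);
      last by rewrite !mulmxA.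
    by rewrite PT mulmxBr mulmxDr mulmxBl mulmxDl t1 t2.
  move: e; generalize (D *m N *m D *m u') w' => v w1 e.
  apply/matrixP => i j; rewrite (ord1 j).
  have := congr1 (fun B : 'cV[K]_n => B i 0) e => /=; rewrite !mxE => ei.
  set a := v i 0 in ei *; set b := w1 i 0 in ei *.
  have h1 : (1 - 2%:R * k) * a + b = 0.
    rewrite (_ : _ + _ = a - (k * a + k * a - b)); last by ring.
    by rewrite {1}ei subrr.
  rewrite {1}(_ : a = (1 - 2%:R * k) * ((1 - 2%:R * k) * a + b) + (2%:R * k - 1) * b
      - 4%:R * (k * k - k) * a); last by ring.
  by rewrite h1 kk subrr mulr0 add0r mulr0 mul0r subr0.
have MX : (D *m (N - w *m w^T) *m D) *m (D *m (P - u *m u^T) *m D) = D - k *: (w' *m u'^T).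
  have A1 : D *m (N - w *m w^T) *m D = D *m N *m D - w' *m w'^T.
    by rewrite mulmxBr mulmxBl w'T /w' !mulmxA.
  have B1 : D *m (P - u *m u^T) *m D = D *m P *m D - u' *m u'^T.
    by rewrite mulmxBr mulmxBl u'T /u' !mulmxA.
  have p1 : D *m N *m D *m (D *m P *m D) = D.
    have [L1 _ _ _] := Dlem Z (dm Z *m N).
    by rewrite !mulmxA /D L1 -/D DNDPD.
  have p2 : D *m N *m D *m (u' *m u'^T) = (2%:R * k - 1) *: (w' *m u'^T).
    by rewrite mulmxA nuE scalemxAl.
  have p3 : w' *m w'^T *m (D *m P *m D) = w' *m u'^T.
    rewrite -mulmxA; congr (_ *m _).
    have [L1 _ _ _] := Dlem Z w^T.
    by rewrite u'E w'T !mulmxA /D L1.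
  have p4 : w' *m w'^T *m (u' *m u'^T) = k *: (w' *m u'^T).
    rewrite mulmxA -(mulmxA w') -[w'^T *m u']tr11 trmx_mul trmxK uw' mul_mx_scalar.
    by rewrite scalemxAl.
  rewrite A1 B1 mulmxBr !mulmxBl p1 p2 p3 p4.
  move: (w' *m u'^T) => W; apply/matrixP => i j; rewrite !mxE; ring.
have key : \sum_y (D *m (N - w *m w^T) *m D) x y * (D *m (P - u *m u^T) *m D) y x
    = 1 - k * (w x 0 * u x 0).
  have := congr1 (fun B : 'M[K]_n => B x x) MX => /=; rewrite mxE => ->.
  by rewrite mxBE mxZE outerE !Dv /D dmE xZ eqxx /= !mul1r.
case: (eqVneq (1 - k * (w x 0 * u x 0)) 0) => [h0 | hne].
  exists x => //; rewrite setUid !det_G1 (S_diag SN) (S_diag SP).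
  have : k * (w x 0 * u x 0) != 0.
    by move/eqP: h0; rewrite subr_eq0 => /eqP <-; rewrite oner_eq0.
  rewrite !mulf_eq0 !negb_or => /andP[_ /andP[wx ux]].
  by split; rewrite ?wx ?ux.
case: (pickP (fun y => (D *m (N - w *m w^T) *m D) x y * (D *m (P - u *m u^T) *m D) y x != 0))
  => [y /= Fy | none]; last first.
  move: hne; rewrite -key big1 ?eqxx // => y _.
  by have := none y => /= /negbFE /eqP.
move: Fy; rewrite !DAD xZ.
case yZ : (y \in Z); rewrite ?mulr0 ?mul0r ?eqxx //= !mulr1 !mul1r.
rewrite mulf_eq0 negb_or !mxBE !outerE => /andP[A0 B0].
have xy : x != y.
  by apply: contraNneq A0 => <-; rewrite (S_diag SN) expr2 subrr.
exists y => //; rewrite !det_G2 //; split.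
  rewrite (S_diag SN x) (S_diag SN y) (S_off SN x y).
  rewrite (_ : _ - _ = (N x y - w x 0 * w y 0) ^+ 2); last by ring.
  by apply: expf_neq0.
rewrite (S_diag SP x) (S_diag SP y) (S_off SP y x).
rewrite (_ : _ - _ = (P y x - u y 0 * u x 0) ^+ 2); last by ring.
by apply: expf_neq0.
Qed.

End Aux.

Lemma symdiffK (T : finType) (A B : {set T}) : symdiff A (symdiff A B) = B.
Proof. by apply/setP => i; rewrite !in_symdiff; case: (i \in A); case: (i \in B). Qed.

Lemma symdiff3 (T : finType) (A B C : {set T}) :
  symdiff A (symdiff (symdiff A B) C) = symdiff B C.
Proof.
by apply/setP => i; rewrite !in_symdiff; case: (i \in A); case: (i \in B); case: (i \in C).
Qed.

Unset Implicit Arguments.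

Theorem proposition2p28 (K : fieldType) (n : nat) (A : 'M[K]_n) (v : 'cV[K]_n) :
  skew_symmetric A ->
  strong_delta_matroid
    [set I : {set 'I_n} | nonsingular (principal_submx (A + v *m v^T) I)].
Proof.
move=> sk; set M := A + v *m v^T.
have memB I : (I \in [set I | nonsingular (principal_submx M I)]) = (\det (Gm M I) != 0).
  by rewrite inE /nonsingular det_principal.
split.
  apply/set0Pn; exists set0; rewrite memB.
  rewrite (_ : Gm M set0 = 1%:M) ?det1 ?oner_eq0 //.
  by apply/matrixP => i j; rewrite GmE inE !mxE.
move=> X Y; rewrite !memB => hX hY x xXY.
have SM := isS_base v sk.
have UX : Gm M X \in unitmx by rewrite unitmxE unitfE.
have SN := pivot_S SM UX.
have GXZ : Gm M X *m Gm (pivot M X) (symdiff X Y) = Gm M Y by rewrite pivotK // symdiffK.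
have UN : Gm (pivot M X) (symdiff X Y) \in unitmx.
  rewrite unitmxE unitfE; apply: contra hY; rewrite -GXZ det_mulmx => /eqP ->.
  by rewrite mulr0.
have [y yZ [h1 h2]] := inner SN UN xXY.
exists y => //; rewrite !memB; split.
  by rewrite -(pivotK [set x; y] UX) det_mulmx mulf_neq0.
have e : Gm M (symdiff Y [set x; y]) =
    Gm M X *m (Gm (pivot M X) (symdiff X Y) *m Gm (pivot (pivot M X) (symdiff X Y)) [set x; y]).
  by rewrite pivotK // pivotK // symdiff3.
by rewrite e !det_mulmx !mulf_neq0 // -unitfE -unitmxE.
Qed.
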